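(* Let $X$ be a nonempty set and $G\le S_X$. If $G$ is rack admissible then $\bigcup_{x\in X/G}(C_G(G_x))^G$ generates $G$. If $G$ is quandle admissible then $\bigcup_{x\in X/G}Z(G_x)^G$ generates $G$.
   Context: Permutations act on the right; for a subset $H\subseteq G$ and $g\in G$, $H^g=g^{-1}Hg$ and $H^G=\bigcup_{g\in G}H^g$. For $G\le S_X$, $G_x$ is the stabilizer of $x$, and $X/G$ a complete set of orbit representatives; $C_G(H)$ is the centralizer and $Z(H)$ the center. A rack is a groupoid $(X,* )$ whose left translations $L_x$ ($y\mapsto x*y$) are bijections and which satisfies $x*(y*z)=(x*y)*(x*z)$; a quandle is a rack with $x*x=x$. $\mathrm{LMlt}(X,* )=\langle L_x:x\in X\rangle$. A subgroup $G\le S_X$ is rack admissible (resp. quandle admissible) if there is a rack (resp. quandle) $(X,* )$ with $\mathrm{LMlt}(X,* )=G$. *)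

(* Defs.v *)
(* Permutations act on the right: x^(fg) = (x^f)^g,
   so the product f*g is the function  fun x => g (f x). *)
Set Implicit Arguments.

Section PermGroups.
Variable X : Type.

Definition inverse_of (f g : X -> X) : Prop :=
  (forall x, g (f x) = x) /\ (forall x, f (g x) = x).

Definition is_perm (f : X -> X) : Prop := exists g, inverse_of f g.

Definition pmul (f g : X -> X) : X -> X := fun x => g (f x).

Definition perm_subgroup (G : (X -> X) -> Prop) : Prop :=
  (forall f, G f -> is_perm f) /\
  G (fun x => x) /\
  (forall f g, G f -> G g -> G (pmul f g)) /\
  (forall f g, G f -> inverse_of f g -> G g).

Definition generates (S G : (X -> X) -> Prop) : Prop :=
  (forall f, S f -> G f) /\
  (forall H, perm_subgroup H -> (forall f, S f -> H f) -> forall f, G f -> H f).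

Definition stabilizer (G : (X -> X) -> Prop) (x : X) : (X -> X) -> Prop :=
  fun g => G g /\ g x = x.

Definition centralizer (G H : (X -> X) -> Prop) : (X -> X) -> Prop :=
  fun g => G g /\ forall h, H h -> pmul g h = pmul h g.

Definition center (H : (X -> X) -> Prop) : (X -> X) -> Prop :=
  centralizer H H.

Definition conj_closure (H G : (X -> X) -> Prop) : (X -> X) -> Prop :=
  fun k => exists g ginv h, G g /\ inverse_of g ginv /\ H h /\
                            k = pmul (pmul ginv h) g.

Definition orbit_transversal (G : (X -> X) -> Prop) (R : X -> Prop) : Prop :=
  (forall x, exists r, R r /\ exists g, G g /\ g r = x) /\
  (forall r1 r2, R r1 -> R r2 -> (exists g, G g /\ g r1 = r2) -> r1 = r2).

(* racks and quandles; L_x = op x is the left translation y |-> x * y *)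
Definition is_rack (op : X -> X -> X) : Prop :=
  (forall x, is_perm (op x)) /\
  (forall x y z, op x (op y z) = op (op x y) (op x z)).

Definition is_quandle (op : X -> X -> X) : Prop :=
  is_rack op /\ (forall x, op x x = x).

Definition left_translations (op : X -> X -> X) : (X -> X) -> Prop :=
  fun f => exists x, f = op x.

Definition rack_admissible (G : (X -> X) -> Prop) : Prop :=
  exists op, is_rack op /\ generates (left_translations op) G.

Definition quandle_admissible (G : (X -> X) -> Prop) : Prop :=
  exists op, is_quandle op /\ generates (left_translations op) G.

End PermGroups.

(* Main.v *)
Require Import Defs.
From Stdlib Require Import FunctionalExtensionality.

Section Aux.
Variable X : Type.

Definition is_aut (op : X -> X -> X) (g : X -> X) :=
  forall a b, g (op a b) = op (g a) (g b).

Lemma G_aut (G : (X -> X) -> Prop) (hG : perm_subgroup G) op :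
  is_rack op -> generates (left_translations op) G ->
  forall g, G g -> is_aut op g.
Proof.
  intros [Hp Hd] [Hin Hmin] g Gg.
  destruct hG as (h1 & h2 & h3 & h4).
  set (H := fun f => G f /\ is_aut op f).
  assert (HH : perm_subgroup H).
  { unfold H; split; [|split; [|split]].
    - intros f [Gf _]; auto.
    - split; auto. intros a b; reflexivity.
    - intros f k [Gf Af] [Gk Ak]; split; auto.
      intros a b; unfold pmul; rewrite Af, Ak; reflexivity.
    - intros f k [Gf Af] [I1 I2]; split; [apply (h4 f); [exact Gf|split; assumption]|].
      assert (inj : forall u v, f u = f v -> u = v).
      { intros u v E. rewrite <- (I1 u), <- (I1 v), E. reflexivity. }
      intros a b. apply inj. rewrite Af, !I2. reflexivity. }
  assert (Hs : forall f, left_translations op f -> H f).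
  { intros f [x ->]; split; [apply Hin; exists x; reflexivity|].
    intros a b; apply Hd. }
  exact (proj2 (Hmin H HH Hs g Gg)).
Qed.

Lemma key (G : (X -> X) -> Prop) (hG : perm_subgroup G)
  (R : X -> Prop) (hR : orbit_transversal G R) op :
  is_rack op -> generates (left_translations op) G ->
  forall x, exists r g ginv, R r /\ G g /\ inverse_of g ginv /\
    op x = pmul (pmul ginv (op r)) g /\ G (op r) /\
    (forall h, stabilizer G r h -> pmul (op r) h = pmul h (op r)).
Proof.
  intros Hr Hgen x.
  pose proof (@G_aut G hG op Hr Hgen) as Aut.
  destruct (proj1 hR x) as (r & Rr & g & Gg & gr).
  destruct (proj1 hG g Gg) as [ginv Hinv].
  exists r, g, ginv. split; [auto|split; [auto|split; [auto|split; [|split]]]].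
  - subst x. apply functional_extensionality; intro y; unfold pmul.
    rewrite (Aut g Gg). rewrite (proj2 Hinv). reflexivity.
  - apply (proj1 Hgen). exists r; reflexivity.
  - intros h [Gh hr]. apply functional_extensionality; intro y; unfold pmul.
    rewrite (Aut h Gh), hr. reflexivity.
Qed.
End Aux.

Theorem proposition3p7 (X : Type) (hX : inhabited X)
  (G : (X -> X) -> Prop) (hG : perm_subgroup G)
  (R : X -> Prop) (hR : orbit_transversal G R) :
  (rack_admissible G ->
     generates (fun f => exists r, R r /\
                  conj_closure (centralizer G (stabilizer G r)) G f) G) /\
  (quandle_admissible G ->
     generates (fun f => exists r, R r /\
                  conj_closure (center (stabilizer G r)) G f) G).
Proof.
  assert (closed : forall f g ginv h, G g -> inverse_of g ginv -> G h ->
            f = pmul (pmul ginv h) g -> G f).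
  { intros f g ginv h Gg I Gh ->. destruct hG as (h1 & h2 & h3 & h4).
    apply h3; auto. apply h3; auto. apply (h4 g); auto. }
  split.
  - intros [op [Hr Hgen]]. split.
    + intros f (r & _ & g & ginv & h & Gg & I & [Gh _] & E). eauto.
    + intros H HH HS f Gf. apply (proj2 Hgen H HH); auto.
      intros k [x ->].
      destruct (@key X G hG R hR op Hr Hgen x) as (r & g & ginv & Rr & Gg & I & E & Gr & C).
      apply HS. exists r. split; auto. exists g, ginv, (op r).
      refine (conj Gg (conj I (conj _ E))). split; auto.
  - intros [op [[Hr Hq] Hgen]]. split.
    + intros f (r & _ & g & ginv & h & Gg & I & [[Gh _] _] & E). eauto.
    + intros H HH HS f Gf. apply (proj2 Hgen H HH); auto.
      intros k [x ->].
      destruct (@key X G hG R hR op Hr Hgen x) as (r & g & ginv & Rr & Gg & I & E & Gr & C).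
      apply HS. exists r. split; auto. exists g, ginv, (op r).
      refine (conj Gg (conj I (conj _ E))). split; [split; auto|].
      intros h [Gh hr]. apply C. split; auto.
Qed.
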